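(* Let $W$ be a finite-dimensional irreducible $H'_n(m)$-module and $\alpha,\beta\in\mathbb C^n$. Then $(\pi_{\alpha,\beta},L(W))$ is an irreducible $A_n(m)\rtimes H_n(m)$-module.
   Context: $n=2k$, $\bar\Gamma=m_1\mathbb Z\oplus\dots\oplus m_n\mathbb Z$, $A_n(m)=\mathbb C[t_1^{\pm m_1},\dots,t_n^{\pm m_n}]$ with monomials $t^r$, $r\in\bar\Gamma$. $(\cdot,\cdot)$ is the standard bilinear form on $\mathbb C^n$, $\bar r=(r_{k+1},\dots,r_{2k},-r_1,\dots,-r_k)$, $d_i=t_i\partial_{t_i}$, $D(u,r)=\sum_iu_it^rd_i$. $H_n(m)=\mathrm{span}\{d_i,\ h_r=D(\bar r,r): r\in\bar\Gamma\}$, a Lie algebra of derivations of $A_n(m)$, and $A_n(m)\rtimes H_n(m)$ is the semidirect product with $A_n(m)$ abelian and $[D(u,r),t^s]=(u,s)t^{r+s}$. $I(\bar r,r)=D(\bar r,r)-D(\bar r,0)$ and $H'_n(m)=\mathrm{span}\{I(\bar r,r):r\in\bar\Gamma\}$, a Lie subalgebra of $H_n(m)$. For an $H'_n(m)$-module $W$ and $\alpha,\beta\in\mathbb C^n$, $L(W)=W\otimes A_n(m)$ with action $D(\bar r,r)(w\otimes t^s)=(I(\bar r,r)w)\otimes t^{r+s}+(\bar r,\beta+s)w\otimes t^{r+s}$ ($0\ne r$), $D(u,0)(w\otimes t^s)=(u,\alpha+s)w\otimes t^s$, $t^r(w\otimes t^s)=w\otimes t^{r+s}$; this module is denoted $(\pi_{\alpha,\beta},L(W))$.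 *)

(* Defs.v *)
From HB Require Import structures.
From mathcomp Require Import all_boot all_order all_algebra.
From mathcomp Require Import complex.
From mathcomp Require Import reals.
Set Implicit Arguments. Unset Strict Implicit. Unset Printing Implicit Defensive.
Import Order.TTheory GRing.Theory Num.Theory.
Local Open Scope ring_scope.

Section Defs.
Variable C : fieldType.
Variable k : nat.
Local Notation n := (k + k)%N.
Local Notation Zn := 'rV[int]_n.
Local Notation Cn := 'rV[C]_n.

Definition rbar (r : Zn) : Zn := row_mx (rsubmx r) (- lsubmx r).
Definition toC (r : Zn) : Cn := map_mx (fun z : int => z%:~R) r.
Definition form (u v : Cn) : C := \sum_(i < n) u ord0 i * v ord0 i.
Definition inGamma (m : 'I_n -> nat) (r : Zn) : Prop :=
  forall i, ((m i)%:Z %| r ord0 i)%Z.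

Variable W : vectType C.

(* A representation of H'_n(m) on W, given by the images rho r of the basis
   elements I(rbar,r) (r in barGamma, r <> 0; I(0bar,0) = 0). *)
Definition Hprime_module (m : 'I_n -> nat) (rho : Zn -> 'End(W)) : Prop :=
  (forall w, rho 0 w = 0) /\
  forall r s, inGamma m r -> inGamma m s -> forall w,
    rho r (rho s w) - rho s (rho r w)
    = form (toC (rbar r)) (toC s) *: (rho (r + s) w - rho r w - rho s w).

Definition Hprime_irreducible (m : 'I_n -> nat) (rho : Zn -> 'End(W)) : Prop :=
  Hprime_module m rho /\ (0 < \dim (fullv : {vspace W}))%N /\
  forall U : {vspace W},
    (forall r, inGamma m r -> forall w, w \in U -> rho r w \in U) ->
    U = 0%VS \/ U = fullv.

(* L(W) = W (x) A_n(m) = finitely supported functions barGamma -> W;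
   f corresponds to sum_s f(s) (x) t^s *)
Definition LW (m : 'I_n -> nat) (f : Zn -> W) : Prop :=
  (exists s : seq Zn, forall x, f x != 0 -> x \in s) /\
  (forall x, f x != 0 -> inGamma m x).

Definition act_t (r : Zn) (f : Zn -> W) : Zn -> W := fun x => f (x - r).
Definition act_D0 (alpha : Cn) (u : Cn) (f : Zn -> W) : Zn -> W :=
  fun x => form u (alpha + toC x) *: f x.
(* h_r = D(rbar,r) *)
Definition act_h (rho : Zn -> 'End(W)) (beta : Cn) (r : Zn) (f : Zn -> W)
  : Zn -> W :=
  fun x => rho r (f (x - r)) + form (toC (rbar r)) (beta + toC (x - r)) *: f (x - r).

Definition ops_linear (m : 'I_n -> nat) (X : (Zn -> W) -> (Zn -> W)) : Prop :=
  (forall f, LW m f -> LW m (X f)) /\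
  (forall f g, LW m f -> LW m g -> forall x, X (fun y => f y + g y) x = X f x + X g x) /\
  (forall c f, LW m f -> forall x, X (fun y => c *: f y) x = c *: X f x).

(* (pi_{alpha,beta}, L(W)) is a module of the Lie algebra A_n(m) x| H_n(m),
   described on the spanning set t^r, D(u,0), h_r (r in barGamma). *)
Definition AH_module (m : 'I_n -> nat) (alpha beta : Cn) (rho : Zn -> 'End(W)) : Prop :=
  (forall r, inGamma m r -> ops_linear m (act_t r)) /\
  (forall u, ops_linear m (act_D0 alpha u)) /\
  (forall r, inGamma m r -> ops_linear m (act_h rho beta r)) /\
  (forall u v f x, act_D0 alpha (u + v) f x = act_D0 alpha u f x + act_D0 alpha v f x) /\
  (forall c u f x, act_D0 alpha (c *: u) f x = c *: act_D0 alpha u f x) /\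
  (forall f, LW m f -> forall x, act_h rho beta 0 f x = 0) /\
  (forall r s f, inGamma m r -> inGamma m s -> LW m f -> forall x,
     act_t r (act_t s f) x - act_t s (act_t r f) x = 0) /\
  (forall u s f, inGamma m s -> LW m f -> forall x,
     act_D0 alpha u (act_t s f) x - act_t s (act_D0 alpha u f) x
     = form u (toC s) *: act_t s f x) /\
  (forall r s f, inGamma m r -> inGamma m s -> LW m f -> forall x,
     act_h rho beta r (act_t s f) x - act_t s (act_h rho beta r f) x
     = form (toC (rbar r)) (toC s) *: act_t (r + s) f x) /\
  (forall u v f, LW m f -> forall x,
     act_D0 alpha u (act_D0 alpha v f) x - act_D0 alpha v (act_D0 alpha u f) x = 0) /\
  (forall u s f, inGamma m s -> LW m f -> forall x,
     act_D0 alpha u (act_h rho beta s f) x - act_h rho beta s (act_D0 alpha u f) x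
     = form u (toC s) *: act_h rho beta s f x) /\
  (forall r s f, inGamma m r -> inGamma m s -> LW m f -> forall x,
     act_h rho beta r (act_h rho beta s f) x - act_h rho beta s (act_h rho beta r f) x
     = form (toC (rbar r)) (toC s) *: act_h rho beta (r + s) f x).

Definition LW_submodule (m : 'I_n -> nat) (alpha beta : Cn) (rho : Zn -> 'End(W))
  (S : (Zn -> W) -> Prop) : Prop :=
  (forall f, S f -> LW m f) /\
  S (fun _ => 0) /\
  (forall f g, S f -> S g -> S (fun x => f x + g x)) /\
  (forall c f, S f -> S (fun x => c *: f x)) /\
  (forall r f, inGamma m r -> S f -> S (act_t r f)) /\
  (forall u f, S f -> S (act_D0 alpha u f)) /\
  (forall r f, inGamma m r -> S f -> S (act_h rho beta r f)).

Definition LW_irreducible (m : 'I_n -> nat) (alpha beta : Cn) (rho : Zn -> 'End(W))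
  : Prop :=
  AH_module m alpha beta rho /\
  (exists f, LW m f /\ exists x, f x != 0) /\
  forall S, LW_submodule m alpha beta rho S ->
    (forall f, S f -> forall x, f x = 0) \/ (forall f, LW m f -> S f).

End Defs.

(* Main.v *)
Require Import Defs.
From HB Require Import structures.
From mathcomp Require Import all_boot all_order all_algebra.
From mathcomp Require Import complex.
From mathcomp Require Import reals.
From mathcomp Require Import ring zify.
From Stdlib Require Import Classical FunctionalExtensionality.
Import GRing.Theory Num.Theory.
Local Open Scope ring_scope.

Section Aux.
Variable C : fieldType.
Variable k : nat.
Local Notation n := (k + k)%N.
Local Notation Zn := 'rV[int]_n.
Local Notation Cn := 'rV[C]_n.
Local Notation formC := (@Defs.form C k).

Lemma toCD (a b : Zn) : toC C (a + b) = toC C a + toC C b.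
Proof. by apply/rowP => i; rewrite !mxE intrD. Qed.
Lemma toCN (a : Zn) : toC C (- a) = - toC C a.
Proof. by apply/rowP => i; rewrite !mxE intrN. Qed.
Lemma toCB (a b : Zn) : toC C (a - b) = toC C a - toC C b.
Proof. by rewrite toCD toCN. Qed.
Lemma toC0 : toC C (0 : Zn) = 0.
Proof. by apply/rowP => i; rewrite !mxE. Qed.

Lemma rbarD (a b : Zn) : rbar (a + b) = rbar a + rbar b.
Proof. by rewrite /rbar linearD /= linearD /= opprD add_row_mx. Qed.
Lemma rbar0 : rbar (0 : Zn) = 0.
Proof. by apply/rowP => i; rewrite /rbar !mxE; case: splitP => j _; rewrite !mxE ?oppr0. Qed.

Lemma dformDl (u v w : Cn) : formC (u + v) w = formC u w + formC v w.
Proof. by rewrite /Defs.form -big_split; apply: eq_bigr => i _; rewrite mxE mulrDl. Qed.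
Lemma dformZl c (u w : Cn) : formC (c *: u) w = c * formC u w.
Proof. by rewrite /Defs.form mulr_sumr; apply: eq_bigr => i _; rewrite mxE mulrA. Qed.
Lemma dformDr (u v w : Cn) : formC u (v + w) = formC u v + formC u w.
Proof. by rewrite /Defs.form -big_split; apply: eq_bigr => i _; rewrite mxE mulrDr. Qed.
Lemma dformNr (u v : Cn) : formC u (- v) = - formC u v.
Proof. by rewrite /Defs.form -sumrN; apply: eq_bigr => i _; rewrite mxE mulrN. Qed.
Lemma dformBr (u v w : Cn) : formC u (v - w) = formC u v - formC u w.
Proof. by rewrite dformDr dformNr. Qed.
Lemma dformDl' (u v w : Cn) : formC (u + v) w = formC u w + formC v w.
Proof. exact: dformDl. Qed.
Lemma dform0l (w : Cn) : formC 0 w = 0.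
Proof. by rewrite /Defs.form big1 // => i _; rewrite mxE mul0r. Qed.

Lemma toCE (a : Zn) i : toC C a 0 i = (a 0 i)%:~R.
Proof. by rewrite mxE. Qed.
Lemma rbarEl (a : Zn) (i : 'I_k) : rbar a 0 (lshift k i) = a 0 (rshift k i).
Proof. by rewrite /rbar row_mxEl mxE. Qed.
Lemma rbarEr (a : Zn) (i : 'I_k) : rbar a 0 (rshift k i) = - a 0 (lshift k i).
Proof. by rewrite /rbar row_mxEr !mxE. Qed.

Lemma form_rbar_anti (r s : Zn) :
  formC (toC C (rbar r)) (toC C s) = - formC (toC C (rbar s)) (toC C r).
Proof.
rewrite /Defs.form !big_split_ord /= opprD -!sumrN addrC; congr (_ + _); apply: eq_bigr => i _;
  rewrite !toCE rbarEl rbarEr intrN; ring.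
Qed.

Lemma form_rbar_self (r : Zn) : formC (toC C (rbar r)) (toC C r) = 0.
Proof.
rewrite /Defs.form !big_split_ord /= -[X in _ + X]opprK -sumrN; apply/eqP; rewrite subr_eq0; apply/eqP.
by apply: eq_bigr => i _; rewrite !toCE rbarEl rbarEr intrN; ring.
Qed.

Lemma formE_delta (i : 'I_n) (v : Cn) : formC (delta_mx 0 i) v = v 0 i.
Proof.
rewrite /Defs.form (bigD1 i) //= big1 ?addr0; first by rewrite mxE !eqxx mul1r.
by move=> j /negbTE ji; rewrite mxE ji andbF mul0r.
Qed.
End Aux.

Set Implicit Arguments. Unset Strict Implicit.

Lemma lmod12 (K : comNzRingType) (V : lmodType K) (ar b as' b' c e : K)
  (A B Cc D E g : V) :
  A - B = c *: (E - Cc - D) -> b - as' = c -> ar - b' = c ->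
  ar * b - as' * b' = c * e ->
  (A + b *: Cc + (ar *: D + (ar * b) *: g)) - (B + b' *: D + (as' *: Cc + (as' * b') *: g))
  = c *: E + (c * e) *: g.
Proof.
move=> hAB hb ha ht.
have -> : A = B + c *: (E - Cc - D) by rewrite -hAB addrC subrK.
have -> : ar * b = as' * b' + c * e by rewrite -ht addrC subrK.
have -> : b = as' + c by rewrite -hb addrC subrK.
have -> : ar = b' + c by rewrite -ha addrC subrK.
rewrite !scalerDr !scalerDl !scalerN.
set x1 := c *: E; set x2 := c *: Cc; set x3 := c *: D; set x4 := (c * e) *: g.
set y1 := as' *: Cc; set y2 := b' *: D; set y3 := (as' * b') *: g.
rewrite !opprD !addrA.
rewrite [LHS](ACl ((1*11)*(3*6)*(4*8)*(5*13)*(7*12)*(9*14)*(2*10))%AC) /=.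
by rewrite !subrr !addNr !add0r.
Qed.

Lemma lmod11 (K : comNzRingType) (V : lmodType K) (a b e c : K) (A g : V) :
  a - b = c ->
  a *: (A + e *: g) - (b *: A + e *: (b *: g)) = c *: (A + e *: g).
Proof.
move=> <-; rewrite scalerBl !scalerDr !scalerA [e * b]mulrC [a * e]mulrC.
by rewrite opprD addrA.
Qed.

Lemma lfunD (K : fieldType) (V : vectType K) (f : 'End(V)) a b : f (a + b) = f a + f b.
Proof. exact: linearD. Qed.
Lemma lfunZ (K : fieldType) (V : vectType K) (f : 'End(V)) c a : f (c *: a) = c *: f a.
Proof. exact: linearZ. Qed.

Section AH.
Variables (C : fieldType) (k : nat) (W : vectType C).
Local Notation n := (k + k)%N.
Local Notation Zn := 'rV[int]_n.
Local Notation Cn := 'rV[C]_n.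
Local Notation formC := (@Defs.form C k).
Variables (m : 'I_n -> nat) (rho : Zn -> 'End(W)) (alpha beta : Cn).

Lemma inGammaD a b : inGamma m a -> inGamma m b -> inGamma m (a + b).
Proof. by move=> ha hb i; rewrite mxE; apply: rpredD. Qed.
Lemma inGammaN a : inGamma m a -> inGamma m (- a).
Proof. by move=> ha i; rewrite mxE dvdzE abszN -dvdzE. Qed.
Lemma inGamma0 : inGamma m 0.
Proof. by move=> i; rewrite mxE; apply: rpred0. Qed.

Lemma LW_shift (f g : Zn -> W) r : inGamma m r -> LW m f ->
  (forall x, g x != 0 -> f (x - r) != 0) -> LW m g.
Proof.
move=> hr [[s hs] hf] hg; split.
  exists (map (fun y => y + r) s) => x /hg /hs hx.
  by apply/mapP; exists (x - r) => //; rewrite subrK.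
move=> x /hg /hf hx; rewrite -(subrK r x); exact: inGammaD.
Qed.

Lemma L1 r : inGamma m r -> ops_linear m (@act_t C k W r).
Proof.
move=> hr; split; last by [].
by move=> f hf; apply: (LW_shift hr hf).
Qed.

Lemma L2 u : ops_linear m (@act_D0 C k W alpha u).
Proof.
split; last split.
- move=> f hf; apply: (LW_shift inGamma0 hf) => x; rewrite subr0 /act_D0.
  by apply: contra => /eqP ->; rewrite scaler0.
- by move=> f g _ _ x; rewrite /act_D0 scalerDr.
- by move=> c f _ x; rewrite /act_D0 scalerA mulrC -scalerA.
Qed.

Lemma L3 (Hr : Hprime_module m rho) r : inGamma m r -> ops_linear m (act_h rho beta r).
Proof.
move=> hr; split; last split.
- move=> f hf; apply: (LW_shift hr hf) => x; rewrite /act_h.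
  by apply: contra => /eqP ->; rewrite linear0 scaler0 addr0.
- by move=> f g _ _ x; rewrite /act_h linearD scalerDr addrACA.
- by move=> c f _ x; rewrite /act_h linearZ scalerDr scalerA mulrC -scalerA.
Qed.

Lemma AH_ok : Hprime_module m rho -> AH_module m alpha beta rho.
Proof.
move=> Hr; have [rho0 hbr] := Hr.
split; first exact: L1.
split; first exact: L2.
split; first exact: L3.
split; first by move=> u v f x; rewrite /act_D0 dformDl scalerDl.
split; first by move=> c u f x; rewrite /act_D0 dformZl scalerA.
split; first by move=> f _ x; rewrite /act_h rbar0 toC0 dform0l scale0r rho0 addr0.
split; first by move=> r s f _ _ _ x; rewrite /act_t addrAC subrr.
split.
  move=> u s f _ _ x; rewrite /act_D0 /act_t -scalerBl; congr (_ *: _).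
  by rewrite toCB !dformDr ?dformNr; ring.
split.
  move=> r s f _ _ _ x; rewrite /act_h /act_t [x - s - r]addrAC.
  have -> : x - (r + s) = x - r - s by rewrite opprD addrA.
  rewrite opprD addrA (addrAC (rho r _)) subrr add0r -scalerBl; congr (_ *: _).
  by rewrite !toCB !dformDr ?dformNr; ring.
split; first by move=> u v f _ x; rewrite /act_D0 !scalerA mulrC subrr.
split.
  move=> u s f _ _ x; rewrite /act_D0 /act_h linearZ /=; apply: lmod11.
  by rewrite toCB !dformDr ?dformNr; ring.
move=> r s f hr hs _ x; rewrite /act_h /act_t [x - s - r]addrAC.
have -> : x - (r + s) = x - r - s by rewrite opprD addrA.
rewrite !lfunD !lfunZ !scalerDr !scalerA.
apply: lmod12; first exact: hbr hr hs _.
- by rewrite !toCB !dformDr ?dformNr ?form_rbar_self (@form_rbar_anti _ _ s r); ring.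
- by rewrite !toCB !dformDr ?dformNr ?form_rbar_self; ring.
- by rewrite rbarD !toCB ?toCN !toCD ?toCN !dformDl !dformDr ?dformNr ?form_rbar_self (@form_rbar_anti _ _ s r); ring.
Qed.
End AH.

Lemma maxsub (K : fieldType) (V : vectType K) (P : V -> Prop) :
  P 0 -> (forall a b, P a -> P b -> P (a + b)) -> (forall c a, P a -> P (c *: a)) ->
  exists U : {vspace V}, (forall v, v \in U -> P v) /\ (forall v, P v -> v \in U).
Proof.
move=> P0 PD PZ.
suff H : forall d (U : {vspace V}), (\dim (fullv : {vspace V}) - \dim U <= d)%N ->
  (forall v, v \in U -> P v) ->
  exists U : {vspace V}, (forall v, v \in U -> P v) /\ (forall v, P v -> v \in U).
  apply: (H _ 0%VS (leqnn _)) => v; rewrite memv0 => /eqP ->; exact: P0.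
elim=> [|d IH] U hd hU.
- case: (classic (exists w, P w /\ w \notin U)) => [[w [Pw wU]]|hno].
    exfalso.
    have h1 := dimv_leqif_sup (addvSl U <[w]>).
    have h2 : (\dim U < \dim (U + <[w]>))%N.
      rewrite (ltn_leqif h1); apply: contra wU => /subvP; apply.
      by have := memv_add (mem0v U) (memv_line w); rewrite add0r.
    have h3 := dimvS (subvf (U + <[w]>)). lia.
  exists U; split => // v Pv; apply: NNPP => hv; apply: hno; exists v; split => //.
  exact/negP.
- case: (classic (exists w, P w /\ w \notin U)) => [[w [Pw wU]]|hno].
    have h1 := dimv_leqif_sup (addvSl U <[w]>).
    have h2 : (\dim U < \dim (U + <[w]>))%N.
      rewrite (ltn_leqif h1); apply: contra wU => /subvP; apply.
      by have := memv_add (mem0v U) (memv_line w); rewrite add0r.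
    have h3 := dimvS (subvf (U + <[w]>)).
    apply: (IH (U + <[w]>)%VS); first lia.
    move=> v /memv_addP [a aU [b /vlineP [c ->] ->]].
    by apply: PD; [exact: hU | exact: PZ].
  exists U; split => // v Pv; apply: NNPP => hv; apply: hno; exists v; split => //.
  exact/negP.
Qed.

Section Main.
Variables (C : numFieldType) (k : nat) (W : vectType C).
Local Notation n := (k + k)%N.
Local Notation Zn := 'rV[int]_n.
Local Notation Cn := 'rV[C]_n.
Local Notation formC := (@Defs.form C k).
Variables (m : 'I_n -> nat) (rho : Zn -> 'End(W)) (alpha beta : Cn).

Definition delta (y : Zn) (w : W) : Zn -> W := fun x => if x == y then w else 0.

Lemma isolate (S : (Zn -> W) -> Prop) :
  LW_submodule m alpha beta rho S -> forall x (s : seq Zn) (f : Zn -> W), S f -> f x != 0 ->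
  (forall y, f y != 0 -> y = x \/ y \in s) ->
  exists g, S g /\ g x != 0 /\ forall y, y != x -> g y = 0.
Proof.
move=> [_ [S0 [SD [SZ [St [SD0 Sh]]]]]] x; elim=> [|y0 s IH] f Sf fx hsupp.
  exists f; split=> //; split=> // y yx; apply: NNPP => /eqP fy.
  by case: (hsupp y fy) => // /eqP; rewrite (negbTE yx).
case: (y0 =P x) => [y0x|/eqP y0x].
  apply: (IH f) => // y /hsupp [->|]; first by left.
  by rewrite inE => /orP [/eqP ->|]; [left|right].
case: (boolP [exists i, x 0 i != y0 0 i]) => [/existsP [i hi]|/existsPn hall]; last first.
  by case/eqP: y0x; apply/rowP => j; have := hall j; rewrite negbK => /eqP.
pose u : Cn := delta_mx 0 i.
pose c := formC u (alpha + toC C y0).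
pose g := fun z => act_D0 alpha u f z + (- c) *: f z.
have gE : forall z, g z = ((z 0 i)%:~R - (y0 0 i)%:~R) *: f z.
  move=> z; rewrite /g /act_D0 /c /u !formE_delta !mxE scaleNr -scalerBl.
  congr (_ *: _); ring.
apply: (IH g).
- by apply: SD => //; [exact: SD0 | exact: SZ].
- by rewrite gE scaler_eq0 negb_or fx andbT subr_eq0 eqr_int.
- move=> y; rewrite gE scaler_eq0 negb_or subr_eq0 eqr_int => /andP [hy fy].
  case: (hsupp y fy) => [->|]; first by left.
  by rewrite inE => /orP [/eqP yy0|]; [rewrite yy0 eqxx in hy|right].
Qed.

Lemma main_irr : Hprime_irreducible m rho -> LW_irreducible m alpha beta rho.
Proof.
move=> [Hmod [dimpos Hirr]].
have [rho0 _] := Hmod.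
have W0 : (fullv : {vspace W}) != 0%VS by rewrite -dimv_eq0 -lt0n.
have w0nz : vpick (fullv : {vspace W}) != 0 by rewrite vpick0.
split; first exact: AH_ok.
split.
  exists (delta 0 (vpick fullv)); split; last by exists 0; rewrite /delta eqxx.
  split.
    by exists [:: 0] => x; rewrite /delta inE; case: (x == 0) => //; rewrite eqxx.
  move=> x; rewrite /delta; case: ifP => [/eqP -> _|_]; [exact: inGamma0 | by rewrite eqxx].
move=> S HS.
have HS' := HS.
case: HS => [SLW [S0 [SD [SZ [St [SD0 Sh]]]]]].
case: (classic (exists f x, S f /\ f x != 0)) => [[f [x [Sf fx]]]|hno]; last first.
  left=> f Sf x; apply: NNPP => /eqP hf; apply: hno; exists f, x; split => //.
right.
have [[s hs] _] := SLW f Sf.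
have [g [Sg [gx g0]]] := @isolate S HS' x s f Sf fx (fun y hy => or_intror (hs y hy)).
have xG : inGamma m x by have [_ hG] := SLW g Sg; exact: hG.
pose P := fun w => S (delta 0 w).
have Pw : P (g x).
  rewrite /P.
  have -> : delta 0 (g x) = act_t (- x) g.
    apply: functional_extensionality => z; rewrite /act_t /delta opprK.
    case: (z =P 0) => [->|/eqP z0]; first by rewrite add0r.
    rewrite g0 //; apply: contra z0 => /eqP h.
    by rewrite -(addrK x z) h subrr.
  by apply: St => //; exact: inGammaN.
have P0 : P 0.
  rewrite /P.
  have -> : delta 0 0 = (fun _ => 0) by apply: functional_extensionality => z; rewrite /delta; case: ifP.
  exact: S0.
have PD : forall a b, P a -> P b -> P (a + b).
  move=> a b Pa Pb; rewrite /P.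
  have -> : delta 0 (a + b) = (fun z => delta 0 a z + delta 0 b z).
    by apply: functional_extensionality => z; rewrite /delta; case: ifP; rewrite ?addr0.
  exact: SD.
have PZ : forall c a, P a -> P (c *: a).
  move=> c a Pa; rewrite /P.
  have -> : delta 0 (c *: a) = (fun z => c *: delta 0 a z).
    by apply: functional_extensionality => z; rewrite /delta; case: ifP; rewrite ?scaler0.
  exact: SZ.
have Prho : forall r a, inGamma m r -> P a -> P (rho r a).
  move=> r a hr Pa; rewrite /P.
  pose c := formC (toC C (rbar r)) (beta + toC C 0).
  have -> : delta 0 (rho r a) =
    (fun z => act_t (- r) (act_h rho beta r (delta 0 a)) z + (- c) *: delta 0 a z).
    apply: functional_extensionality => z; rewrite /act_t /act_h /delta opprK addrK.
    case: (z =P 0) => [->|_]; first by rewrite scaleNr addrK.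
    by rewrite !scaler0 linear0 !addr0.
  apply: SD; last exact: SZ.
  by apply: St; [exact: inGammaN | exact: Sh].
have [U [UP PU]] := maxsub P0 PD PZ.
have Uinv : forall r, inGamma m r -> forall w, w \in U -> rho r w \in U.
  by move=> r hr w /UP Pw'; apply: PU; exact: Prho.
have Uf : U = fullv.
  case: (Hirr U Uinv) => // U0.
  by have := PU _ Pw; rewrite U0 memv0 (negbTE gx).
have Pall : forall w, P w by move=> w; apply: UP; rewrite Uf memvf.
have Sdelta : forall y w, inGamma m y -> S (delta y w).
  move=> y w hy.
  have -> : delta y w = act_t y (delta 0 w).
    by apply: functional_extensionality => z; rewrite /act_t /delta subr_eq0.
  exact: St hy (Pall w).
suff H : forall (l : seq Zn) (h : Zn -> W), (forall y, h y != 0 -> y \in l) ->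
    (forall y, h y != 0 -> inGamma m y) -> S h.
  by move=> h [[l hl] hG]; exact: (H l).
elim=> [|y0 l IH] h hl hG.
  have -> : h = (fun _ => 0); last exact: S0.
  apply: functional_extensionality => z; apply: NNPP => /eqP hz.
  by have := hl z hz.
case: (h y0 =P 0) => [hy0|/eqP hy0].
  apply: IH => // y hy; move: (hl y hy); rewrite inE => /orP [/eqP e|] //.
  by rewrite e hy0 eqxx in hy.
have -> : h = (fun z => delta y0 (h y0) z + (fun z => if z == y0 then 0 else h z) z).
  apply: functional_extensionality => z; rewrite /delta.
  by case: (z =P y0) => [->|]; rewrite ?addr0 ?add0r.
apply: SD; first exact: Sdelta (hG _ hy0).
apply: IH.
- move=> y /=; case: (y =P y0) => [_|/eqP yy0]; first by rewrite eqxx.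
  by move/hl; rewrite inE (negbTE yy0).
- by move=> y /=; case: ifP => [_|_ /hG]; [rewrite eqxx|].
Qed.
End Main.

Unset Implicit Arguments. Set Strict Implicit.

Theorem lemma6p2 (R : realType) (k : nat) (m : 'I_(k + k) -> nat)
  (W : vectType R[i]) (rho : 'rV[int]_(k + k) -> 'End(W))
  (alpha beta : 'rV[R[i]]_(k + k)) :
  (forall i, (0 < m i)%N) ->
  Hprime_irreducible m rho ->
  LW_irreducible m alpha beta rho.
Proof.
move=> _; exact: main_irr.
Qed.
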